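(* Let $\Phi$ be a (finite crystallographic, possibly non-reduced) root system and $V\le\mathbb R\Phi$ a subspace. 1. If $V$ is $1$-small and $\alpha\in\Phi\cap V$, then there is an irreducible saturated root subsystem $\alpha\in\Psi\subseteq\Phi$ of rank $2$ with $\mathbb R\Psi\cap V=\mathbb R\alpha$. 2. If $V$ is $2$-small and $\alpha,\beta\in\Phi$ are linearly independent with $(\mathbb R\alpha+\mathbb R\beta)\cap V$ one-dimensional, then there is an irreducible saturated root subsystem $\alpha\in\Psi\subseteq\Phi$ of rank $2$ with $\beta\notin\Psi$ and $(\mathbb R\Psi+\mathbb R\beta)\cap V$ one-dimensional. 3. If $V$ is $2$-small and $\alpha,\beta\in\Phi\cap V$ are linearly independent, then there is an irreducible saturated root subsystem $\alpha\in\Psi\subseteq\Phi$ of rank $2$ with $\beta\notin\Psi$ and $\mathbb R\Psi\cap V=\mathbb R\alpha$. 4. If $V$ is $2$-small, $\alpha\in\Phi\cap V$ and $\beta,\gamma\in\Phi\setminus V$ are linearly independent, and $(\mathbb R\alpha+\mathbb R\beta+\mathbb R\gamma)\cap V$ is two-dimensional, then there is an irreducible saturated root subsystem $\alpha\in\Psi\subseteq\Phi$ of rank $2$ with $\beta,\gamma\notin\Psi$ such that both $(\mathbb R\Psi+\mathbb R\beta)\cap V$ and $(\mathbb R\Psi+\mathbb R\gamma)\cap V$ are one-dimensional. 5. If $V$ is $2$-small, the roots $\alpha\in\Phi\cap V$ and $\beta,\gamma\in\Phi\setminus V$ are linearly independent, and $(\mathbb R\alpha+\mathbb R\beta+\mathbb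 R\gamma)\cap V$ is two-dimensional, then there is an irreducible saturated root subsystem $\gamma\in\Psi\subseteq\Phi$ of rank $2$ such that $\mathbb R\alpha+\mathbb R\beta+\mathbb R\Psi$ is four-dimensional and $(\mathbb R\Psi+\mathbb R\alpha+\mathbb R\beta)\cap V$ is two-dimensional.
   Context: A subspace $V\le\mathbb R\Phi$ is $k$-small if for every irreducible component $\Psi$ of $\Phi$ the codimension of $V\cap\mathbb R\Psi$ in $\mathbb R\Psi$ is at least $k$. A saturated root subsystem of $\Phi$ is a subset of the form $\Phi\cap W$ for a linear subspace $W$. *)

(* Defs.v *)
From HB Require Import structures.
From mathcomp Require Import all_boot all_order all_algebra.
From mathcomp Require Import reals.
Set Implicit Arguments. Unset Strict Implicit. Unset Printing Implicit Defensive.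
Import Order.TTheory GRing.Theory Num.Theory.
Local Open Scope ring_scope.

Section RootSystems.
Variables (R : realType) (n : nat).
Implicit Types (u v x y a b : 'rV[R]_n) (Phi Psi : seq 'rV[R]_n).

Definition dotv u v : R := (u *m v^T) 0 0.

Definition refl a x : 'rV[R]_n := x - ((2 * dotv x a) / dotv a a) *: a.

(* finite crystallographic root system (possibly non-reduced) in its span *)
Definition root_system Phi : Prop :=
  [/\ (0 : 'rV[R]_n) \notin Phi,
      (forall a b, a \in Phi -> b \in Phi -> refl a b \in Phi) &
      (forall a b, a \in Phi -> b \in Phi ->
         (2 * dotv b a) / dotv a a \is a Num.int)].

Definition irreducible Psi : Prop :=
  Psi != [::] /\
  forall P : pred 'rV[R]_n,
    (forall x y, x \in Psi -> y \in Psi -> P x -> ~~ P y -> dotv x y = 0) ->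
    (forall x, x \in Psi -> P x) \/ (forall x, x \in Psi -> ~~ P x).

Definition irr_component Phi Psi : Prop :=
  [/\ {subset Psi <= Phi}, irreducible Psi &
      forall x y, x \in Psi -> y \in Phi -> dotv x y != 0 -> y \in Psi].

Definition saturated Phi Psi : Prop :=
  exists W : {vspace 'rV[R]_n}, forall x, (x \in Psi) = (x \in Phi) && (x \in W).

Definition k_small Phi (V : {vspace 'rV[R]_n}) (k : nat) : Prop :=
  forall Psi, irr_component Phi Psi ->
    (k <= \dim <<Psi>> - \dim (V :&: <<Psi>>))%N.

Definition irr_sat_rank2 Phi Psi : Prop :=
  [/\ saturated Phi Psi, irreducible Psi & \dim <<Psi>>%VS = 2%N].

End RootSystems.

(* Main.v *)
Require Import Defs.
From HB Require Import structures.
From mathcomp Require Import all_boot all_order all_algebra.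
From mathcomp Require Import reals.
From mathcomp Require Import zify.
Import Order.TTheory GRing.Theory Num.Theory.
Local Open Scope ring_scope.

Section H.
Variables (R : realType) (n : nat).
Implicit Types (u v w x y a b d : 'rV[R]_n) (Phi Psi : seq 'rV[R]_n).

Lemma dotvE u v : dotv u v = \sum_k u 0 k * v 0 k.
Proof. by rewrite /dotv !mxE; apply: eq_bigr => k _; rewrite mxE. Qed.

Lemma dotvC u v : dotv u v = dotv v u.
Proof. by rewrite !dotvE; apply: eq_bigr => k _; rewrite mulrC. Qed.

Lemma dotvDl u v w : dotv (u + w) v = dotv u v + dotv w v.
Proof. by rewrite !dotvE -big_split; apply: eq_bigr => k _; rewrite mxE mulrDl. Qed.

Lemma dotvZl s u v : dotv (s *: u) v = s * dotv u v.
Proof. by rewrite !dotvE mulr_sumr; apply: eq_bigr => k _; rewrite mxE mulrA. Qed.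

Lemma dotvNl u v : dotv (- u) v = - dotv u v.
Proof. by rewrite -scaleN1r dotvZl mulN1r. Qed.

Lemma dotvDr u v w : dotv v (u + w) = dotv v u + dotv v w.
Proof. by rewrite dotvC dotvDl !(dotvC v). Qed.

Lemma dotvZr s u v : dotv v (s *: u) = s * dotv v u.
Proof. by rewrite dotvC dotvZl dotvC. Qed.

Lemma dotvBr u v w : dotv v (u - w) = dotv v u - dotv v w.
Proof. by rewrite dotvDr (dotvC v (- w)) dotvNl (dotvC w). Qed.

Lemma dotv_eq0 u : (dotv u u == 0) = (u == 0).
Proof.
apply/idP/idP; last by move/eqP->; rewrite dotvE big1 // => k _; rewrite mxE mul0r.
move/eqP => H; rewrite dotvE in H; apply/eqP/rowP => k; rewrite mxE.
have Hp : forall i : 'I_n, xpredT i -> 0 <= u 0 i * u 0 i.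
  by move=> i _; rewrite -expr2 sqr_ge0.
have := (psumr_eq0P (P := xpredT) (F := fun i => u 0 i * u 0 i)) Hp H k isT.
by move=> /eqP; rewrite mulf_eq0 orbb => /eqP.
Qed.

Implicit Types (U W : {vspace 'rV[R]_n}).

Lemma capD U W d : d \notin (U + W)%VS -> ((U + <[d]>) :&: W)%VS = (U :&: W)%VS.
Proof.
move=> dn; apply/subv_anti/andP; split; last first.
  by apply: capvS => //; apply: addvSl.
apply/subvP => x /memv_capP[/memv_addP[u Uu [v /vlineP[t ->] ->]] xW].
have [t0|tn0] := eqVneq t 0.
  by rewrite t0 scale0r addr0 memv_cap Uu; rewrite t0 scale0r addr0 in xW.
case/negP: dn.
have -> : d = t^-1 *: ((u + t *: d) - u).
  by rewrite addrC addKr scalerA mulVf // scale1r.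
apply: memvZ; apply: memvB.
  exact: (subvP (addvSr U W)).
exact: (subvP (addvSl U W)).
Qed.

Lemma dim_addline U d : d \notin U -> \dim (U + <[d]>) = (\dim U).+1.
Proof.
move=> dn; rewrite dimv_disjoint_sum ?dim_vline; last first.
  apply/eqP; rewrite -subv0; apply/subvP => x /memv_capP[xU /vlineP[t xe]].
  rewrite memv0; apply/eqP; rewrite xe; have [->|tn0] := eqVneq t 0; first by rewrite scale0r.
  case/negP: dn; have -> : d = t^-1 *: x by rewrite xe scalerA mulVf // scale1r.
  exact: memvZ.
have -> : d != 0 by apply: contraNneq dn => ->; apply: mem0v.
by rewrite addn1.
Qed.

Lemma free2 a b : free [:: a; b] -> b \notin <[a]>%VS.
Proof.
rewrite (@perm_free _ _ _ [:: b; a]) ?free_cons ?span_seq1; first by case/andP.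
by rewrite (perm_catC [:: a] [:: b]).
Qed.

Lemma rank2 Phi a d : root_system Phi -> a \in Phi -> d \in Phi -> dotv a d != 0 ->
  d \notin <[a]>%VS ->
  exists Psi, [/\ irr_sat_rank2 Phi Psi, a \in Psi &
                  <<Psi>>%VS = (<[a]> + <[d]>)%VS].
Proof.
move=> [Phi0 _ _] aP dP ad dn.
set P := (<[a]> + <[d]>)%VS.
set Psi := filter (fun x => x \in P) Phi.
have memPsi x : (x \in Psi) = (x \in Phi) && (x \in P) by rewrite mem_filter andbC.
have aPsi : a \in Psi by rewrite memPsi aP; apply: (subvP (addvSl _ _)); apply: memv_line.
have dPsi : d \in Psi by rewrite memPsi dP; apply: (subvP (addvSr _ _)); apply: memv_line.
have spanE : <<Psi>>%VS = P.
  apply/subv_anti/andP; split.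
    by apply/span_subvP => x; rewrite memPsi => /andP[].
  by rewrite subv_add -!memvE; apply/andP; split; apply: memv_span.
have a0 : a != 0 by apply: contraNneq Phi0 => <-.
exists Psi; split => //; split => //.
- by exists P.
- split; first by apply/eqP => E; rewrite E in aPsi.
  move=> Q HQ.
  have key : forall x, x \in Psi -> dotv a x = 0 -> dotv d x = 0 -> False.
    move=> x; rewrite memPsi => /andP[xPhi /memv_addP[u /vlineP[s ->] [v /vlineP[t ->] xe]]] ax dx.
    have : dotv x x = 0 by rewrite {1}xe dotvDl !dotvZl ax dx !mulr0 addr0.
    by move/eqP; rewrite dotv_eq0 => /eqP x0; move: Phi0; rewrite -x0 xPhi.
  have [Qa|Qa] := boolP (Q a).
    left => x xPsi; apply/negPn/negP => Qx.
    have Qd : Q d by apply/negPn/negP => Qd; case/eqP: ad; exact: HQ.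
    by apply: (key x xPsi); apply: HQ.
  right => x xPsi; apply/negP => Qx.
  have Qd : ~~ Q d by apply/negP => Qd; case/eqP: ad; rewrite dotvC; exact: HQ.
  by apply: (key x xPsi); rewrite dotvC; apply: HQ.
- by rewrite spanE dim_addline // dim_vline a0.
Qed.

Lemma conn_ind m (e : rel 'I_m) i0 (Q : 'I_m -> Prop) :
  (forall i j, connect e i0 i -> e i j -> Q i -> Q j) -> Q i0 ->
  forall j, connect e i0 j -> Q j.
Proof.
move=> step Q0 j /connectP[p pth ->].
have gen : forall (q : seq 'I_m) (z : 'I_m), connect e i0 z -> Q z -> path e z q -> Q (last z q).
  elim=> [//|y q IH] z cx Qx /= /andP[exy pq].
  apply: IH pq; first by apply: connect_trans cx (connect1 exy).
  exact: step exy Qx.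
by apply: gen pth => //; apply: connect0.
Qed.

Lemma avoid Phi (V W : {vspace 'rV[R]_n}) a k : root_system Phi -> k_small Phi V k ->
  a \in Phi -> (\dim (V + W) < \dim V + k)%N ->
  exists2 d, d \in Phi & (dotv a d != 0) && (d \notin W).
Proof.
move=> rs ks aP dimH; case: rs => [Phi0 reflP _].
apply/hasP; apply/negPn/negP => /hasPn Hn.
pose m := size Phi.
pose f (i : 'I_m) := nth 0 Phi i.
pose e := [rel i j : 'I_m | dotv (f i) (f j) != 0].
have i0lt : (index a Phi < m)%N by rewrite index_mem.
pose i0 := Ordinal i0lt.
have fi0 : f i0 = a by rewrite /f nth_index.
have fP i : f i \in Phi by rewrite /f mem_nth.
pose C := map f (filter (connect e i0) (enum 'I_m)).
have memC x : reflect (exists2 i, connect e i0 i & x = f i) (x \in C).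
  apply: (iffP mapP) => [[i] | [i ci ->]].
    by rewrite mem_filter mem_enum andbT => ci ->; exists i.
  by exists i => //; rewrite mem_filter mem_enum andbT.
have f0 i : f i != 0 by apply: contraNneq Phi0 => <-.
have fii i : dotv (f i) (f i) != 0 by rewrite dotv_eq0.
pose G (i : 'I_m) := forall y, y \in Phi -> dotv (f i) y != 0 -> y \in W.
have GC : forall j, connect e i0 j -> G j.
  apply: conn_ind.
    move=> i j _ eij Gi y yP fjy.
    have [fiy|fiy] := eqVneq (dotv (f i) y) 0; last by exact: Gi.
    set c := (2 * dotv y (f j)) / dotv (f j) (f j).
    have c0 : c != 0.
      by rewrite mulf_neq0 ?invr_eq0 // mulf_neq0 ?pnatr_eq0 // dotvC.
    have rP : refl (f j) y \in Phi := reflP _ _ (fP j) yP.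
    have rW : refl (f j) y \in W.
      apply: (Gi _ rP); rewrite /refl dotvBr dotvZr fiy sub0r oppr_eq0; exact: mulf_neq0.
    have fjW : f j \in W by exact: (Gi _ (fP j) eij).
    have -> : y = refl (f j) y + c *: f j by rewrite /refl subrK.
    by rewrite memvD // memvZ.
  move=> y yP ay; rewrite fi0 in ay.
  by have := Hn y yP; rewrite ay /= negbK.
have CW : (<<C>> <= W)%VS.
  by apply/span_subvP => x /memC[i ci ->]; exact: GC ci _ (fP i) (fii i).
have irrC : irr_component Phi C.
  split.
  - by move=> x /memC[i _ ->].
  - split.
      apply/eqP => C0; have : a \in C by apply/memC; exists i0 => //; apply: connect0.
      by rewrite C0.
    move=> P HP.
    have prop (bb : bool) : P a = bb -> forall j, connect e i0 j -> P (f j) = bb.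
      move=> Pa; apply: conn_ind; last by rewrite fi0.
      move=> i j ci eij Pi.
      have cj : connect e i0 j := connect_trans ci (connect1 eij).
      have fiC : f i \in C by apply/memC; exists i.
      have fjC : f j \in C by apply/memC; exists j.
      case: bb Pa Pi => _ Pi; case Pfj: (P (f j)) => //.
        by case/eqP: eij; apply: (HP _ _ fiC fjC); rewrite ?Pi ?Pfj.
      by case/eqP: eij; rewrite dotvC; apply: (HP _ _ fjC fiC); rewrite ?Pi ?Pfj.
    case Pa: (P a); [left|right] => x /memC[j cj ->]; by rewrite (prop _ Pa j cj).
  - move=> x y /memC[i ci ->] yP xy; apply/memC.
    have jlt : (index y Phi < m)%N by rewrite index_mem.
    have fj : f (Ordinal jlt) = y by rewrite /f nth_index.
    exists (Ordinal jlt) => //.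
    by apply: connect_trans ci (connect1 _); rewrite /= fj.
have := ks C irrC.
have := dimv_sum_cap V <<C>>%VS.
have := dimvS (addvS (subvv V) CW).
have := dimvS (addvSl V W).
rewrite capvC.
move: dimH; set A : nat := \dim (V + W); set B : nat := \dim (V + <<C>>); set D : nat := \dim (<<C>> :&: V); set E : nat := \dim V; set F : nat := \dim <<C>>; clearbody A B D E F; move=> h0 h1 h2 h3 h4.
lia.
Qed.

Lemma addvAC' U1 U2 U3 : (U1 + U2 + U3 = U1 + U3 + U2)%VS.
Proof. by rewrite -!addvA (addvC U2). Qed.

Lemma notin_sub (U W : {vspace 'rV[R]_n}) d : d \notin W -> (U <= W)%VS -> d \notin U.
Proof. by move=> dn UW; apply: contra dn => dU; apply: (subvP UW). Qed.

Lemma capline (V : {vspace 'rV[R]_n}) a d : a \in V -> d \notin V ->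
  ((<[a]> + <[d]>) :&: V)%VS = <[a]>%VS.
Proof.
move=> aV dn; rewrite capD; first by apply/capv_idPl; rewrite -memvE.
by rewrite (addv_idPr _); rewrite -?memvE.
Qed.

Lemma in_line (W : {vspace 'rV[R]_n}) a d x : a \in W -> d \notin W ->
  x \in (<[a]> + <[d]>)%VS -> x \in W -> x \in <[a]>%VS.
Proof.
move=> aW dn xP xW.
have : x \in ((<[a]> + <[d]>) :&: W)%VS by rewrite memv_cap xP xW.
by rewrite capline.
Qed.

End H.
Arguments avoid {R n Phi V W a k}.
Arguments rank2 {R n Phi a d}.
Arguments in_line {R n W a d x}.
Arguments notin_sub {R n U W d}.
Arguments free2 {R n a b}.

Theorem mainTheorem2 (R : realType) (n : nat) (Phi : seq 'rV[R]_n)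
    (V : {vspace 'rV[R]_n}) :
  root_system Phi -> (V <= <<Phi>>)%VS ->
  [/\
   (* 1 *)
   (k_small Phi V 1 ->
    forall a, a \in Phi -> a \in V ->
    exists Psi, [/\ irr_sat_rank2 Phi Psi, a \in Psi &
                    (<<Psi>> :&: V)%VS = <[a]>%VS]),
   (* 2 *)
   (k_small Phi V 2 ->
    forall a b, a \in Phi -> b \in Phi -> free [:: a; b] ->
    \dim ((<[a]> + <[b]>) :&: V)%VS = 1%N ->
    exists Psi, [/\ irr_sat_rank2 Phi Psi, a \in Psi, b \notin Psi &
                    \dim ((<<Psi>> + <[b]>) :&: V)%VS = 1%N]),
   (* 3 *)
   (k_small Phi V 2 ->
    forall a b, a \in Phi -> a \in V -> b \in Phi -> b \in V ->
    free [:: a; b] ->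
    exists Psi, [/\ irr_sat_rank2 Phi Psi, a \in Psi, b \notin Psi &
                    (<<Psi>> :&: V)%VS = <[a]>%VS]),
   (* 4 *)
   (k_small Phi V 2 ->
    forall a b c, a \in Phi -> a \in V ->
    b \in Phi -> b \notin V -> c \in Phi -> c \notin V ->
    free [:: b; c] ->
    \dim ((<[a]> + <[b]> + <[c]>) :&: V)%VS = 2%N ->
    exists Psi, [/\ irr_sat_rank2 Phi Psi, a \in Psi, b \notin Psi, c \notin Psi &
                    \dim ((<<Psi>> + <[b]>) :&: V)%VS = 1%N /\
                    \dim ((<<Psi>> + <[c]>) :&: V)%VS = 1%N]) &
   (* 5 *)
   (k_small Phi V 2 ->
    forall a b c, a \in Phi -> a \in V ->
    b \in Phi -> b \notin V -> c \in Phi -> c \notin V ->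
    free [:: a; b; c] ->
    \dim ((<[a]> + <[b]> + <[c]>) :&: V)%VS = 2%N ->
    exists Psi, [/\ irr_sat_rank2 Phi Psi, c \in Psi,
                    \dim (<[a]> + <[b]> + <<Psi>>)%VS = 4%N &
                    \dim ((<<Psi>> + <[a]> + <[b]>) :&: V)%VS = 2%N])].

Proof.
move=> rs VP.
have Phi0 : 0 \notin Phi by case: rs.
have nz x : x \in Phi -> x != 0 by move=> xP; apply: contraNneq Phi0 => <-.
have dimVV : \dim (V + V)%VS = \dim V by rewrite addvv.
split.
- move=> ks a aP aV.
  have [d dP /andP[ad dV]] := @avoid _ _ Phi V V a 1 rs ks aP (ltac:(by rewrite dimVV addn1)).
  have dn : d \notin <[a]>%VS by apply: notin_sub dV _; rewrite -memvE.
  have [Psi [H1 H2 H3]] := rank2 rs aP dP ad dn.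
  by exists Psi; split => //; rewrite H3 capline.
- move=> ks a b aP bP fab Hdim.
  set U := (<[a]> + <[b]>)%VS in Hdim *.
  have dU : \dim U = 2%N by move/eqP: fab; rewrite span_cons span_seq1.
  have dW : (\dim (V + (U + V)) < \dim V + 2)%N.
    rewrite addvC -addvA addvv.
    have := dimv_sum_cap U V; rewrite Hdim dU; by move=> h; rewrite addnC -h addn1 ltnSn.
  have [d dP /andP[ad dn]] := avoid rs ks aP dW.
  have aW : a \in (U + V)%VS.
    by apply: (subvP (addvSl _ _)); apply: (subvP (addvSl _ _)); apply: memv_line.
  have bW : b \in (U + V)%VS.
    by apply: (subvP (addvSl _ _)); apply: (subvP (addvSr _ _)); apply: memv_line.
  have dna : d \notin <[a]>%VS by apply: notin_sub dn _; rewrite -memvE.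
  have [Psi [H1 H2 H3]] := rank2 rs aP dP ad dna.
  exists Psi; split => //.
    apply/negP => bPsi.
    have bS : b \in (<[a]> + <[d]>)%VS by rewrite -H3; apply: memv_span.
    by move: (free2 fab); rewrite (in_line aW dn bS bW).
  by rewrite H3 addvAC' capD.
- move=> ks a b aP aV bP bV fab.
  have [d dP /andP[ad dV]] := @avoid _ _ Phi V V a 2 rs ks aP (ltac:(by rewrite dimVV addn2)).
  have dn : d \notin <[a]>%VS by apply: notin_sub dV _; rewrite -memvE.
  have [Psi [H1 H2 H3]] := rank2 rs aP dP ad dn.
  exists Psi; split => //; last by rewrite H3 capline.
  apply/negP => bPsi.
  have bS : b \in (<[a]> + <[d]>)%VS by rewrite -H3; apply: memv_span.
  by move: (free2 fab); rewrite (in_line aV dV bS bV).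
- move=> ks a b c aP aV bP bV cP cV fbc Hdim.
  set X := (<[a]> + <[b]> + <[c]>)%VS in Hdim *.
  have dX : (\dim X <= 3)%N.
    rewrite /X; apply: leq_trans (dimv_add_leqif _ _).1 _.
    rewrite dim_vline; apply: leq_trans (leq_add (dimv_add_leqif _ _).1 (leqnn _)) _.
    by rewrite !dim_vline; do 3 case: (_ != 0).
  have dW : (\dim (V + (X + V)) < \dim V + 2)%N.
    rewrite addvC -addvA addvv.
    have := dimv_sum_cap X V; rewrite Hdim; move: dX; set x : nat := \dim (X + V); set y : nat := \dim X; set z : nat := \dim V; clearbody x y z; lia.
  have [d dP /andP[ad dn]] := avoid rs ks aP dW.
  have XW : (X <= X + V)%VS by apply: addvSl.
  have memX x : x \in [:: a; b; c] -> x \in (X + V)%VS.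
    move=> xin; apply: (subvP XW); rewrite /X.
    rewrite !inE in xin; case/or3P: xin => /eqP ->.
    + by apply: (subvP (addvSl _ _)); apply: (subvP (addvSl _ _)); apply: memv_line.
    + by apply: (subvP (addvSl _ _)); apply: (subvP (addvSr _ _)); apply: memv_line.
    + by apply: (subvP (addvSr _ _)); apply: memv_line.
  have aW := memX a (ltac:(by rewrite !inE eqxx)).
  have bW := memX b (ltac:(by rewrite !inE eqxx orbT)).
  have cW := memX c (ltac:(by rewrite !inE eqxx !orbT)).
  have dna : d \notin <[a]>%VS by apply: notin_sub dn _; rewrite -memvE.
  have [Psi [H1 H2 H3]] := rank2 rs aP dP ad dna.
  have notPsi x : x \in (X + V)%VS -> x \notin V -> x \notin Psi.
    move=> xW xV; apply/negP => xPsi.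
    have xS : x \in (<[a]> + <[d]>)%VS by rewrite -H3; apply: memv_span.
    have := in_line aW dn xS xW; case/vlineP => t xe.
    by move: xV; rewrite xe memvZ.
  have dimfin x : x \in (X + V)%VS -> x \notin V -> 
      (<[a]> + <[x]> <= X + V)%VS ->
      \dim ((<<Psi>> + <[x]>) :&: V)%VS = 1%N.
    move=> xW xV sub.
    rewrite H3 addvAC' capD; last by apply: notin_sub dn _; rewrite subv_add sub addvSr.
    by rewrite capline // dim_vline nz.
  have subb : (<[a]> + <[b]> <= X + V)%VS.
    by rewrite subv_add -!memvE aW bW.
  have subc : (<[a]> + <[c]> <= X + V)%VS.
    by rewrite subv_add -!memvE aW cW.
  exists Psi; split => //; try exact: notPsi.
  by split; apply: dimfin.
- move=> ks a b c aP aV bP bV cP cV fabc Hdim.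
  set X := (<[a]> + <[b]> + <[c]>)%VS in Hdim *.
  have dX : \dim X = 3%N.
    by move/eqP: fabc; rewrite !span_cons span_nil addv0 !addvA.
  have dW : (\dim (V + (X + V)) < \dim V + 2)%N.
    rewrite addvC -addvA addvv.
    have := dimv_sum_cap X V; rewrite Hdim dX; set x : nat := \dim (X + V); set z : nat := \dim V; clearbody x z; lia.
  have [d dP /andP[cd dn]] := avoid rs ks cP dW.
  have cW : c \in (X + V)%VS.
    by apply: (subvP (addvSl _ _)); apply: (subvP (addvSr _ _)); apply: memv_line.
  have dnc : d \notin <[c]>%VS by apply: notin_sub dn _; rewrite -memvE.
  have [Psi [H1 H2 H3]] := rank2 rs cP dP cd dnc.
  have E1 : (<[a]> + <[b]> + <<Psi>> = X + <[d]>)%VS by rewrite H3 /X !addvA.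
  have E2 : (<<Psi>> + <[a]> + <[b]> = X + <[d]>)%VS.
    by rewrite H3 -[in LHS]addvA [in LHS]addvC !addvA.
  have dnX : d \notin X by apply: notin_sub dn (addvSl _ _).
  exists Psi; split => //.
    by rewrite E1 dim_addline // dX.
  by rewrite E2 capD.
Qed.
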